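(* Let $G$ be a strongly regular graph with parameters $(n,d,1,\mu)$ (i.e. with $\lambda=1$). Let $m$ be the number of edges of $G$, let $\theta_1\ge\theta_2\ge\cdots\ge\theta_n$ be the eigenvalues of its adjacency matrix, let $n^+$ be the number of positive eigenvalues, let $\omega=\omega(G)$ be the clique number, and let $\ell=\min(n^+,\omega)$. Then \[ \theta_1^2+\theta_2^2+\cdots+\theta_\ell^2\le \frac{2m(\omega-1)}{\omega}. \]
   Context: A strongly regular graph with parameters $(n,d,\lambda,\mu)$ is a $d$-regular graph on $n$ vertices in which every pair of adjacent vertices has exactly $\lambda$ common neighbours and every pair of distinct non-adjacent vertices has exactly $\mu$ common neighbours. Here $\mu$ denotes the SRG parameter, not an eigenvalue. *)

(* Defs.v *)
From HB Require Import structures.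
From mathcomp Require Import all_boot all_order all_algebra.
From mathcomp Require Import reals.
Set Implicit Arguments. Unset Strict Implicit. Unset Printing Implicit Defensive.
Import Order.TTheory GRing.Theory Num.Theory.
Local Open Scope ring_scope.

Definition simple_graph (n : nat) (e : rel 'I_n) : Prop :=
  (forall x, ~~ e x x) /\ (forall x y, e x y = e y x).

Definition srg (n d lam mu : nat) (e : rel 'I_n) : Prop :=
  [/\ simple_graph e,
      (forall x, #|[set y | e x y]| = d),
      (forall x y, e x y -> #|[set z | e x z && e y z]| = lam) &
      (forall x y, x != y -> ~~ e x y -> #|[set z | e x z && e y z]| = mu)].

Definition num_edges (n : nat) (e : rel 'I_n) : nat :=
  #|[set E : {set 'I_n} | [exists x, exists y, e x y && (E == [set x; y])]]|.

Definition is_clique (n : nat) (e : rel 'I_n) (A : {set 'I_n}) : bool :=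
  [forall x in A, forall y in A, (x != y) ==> e x y].

Definition clique_number (n : nat) (e : rel 'I_n) : nat :=
  \max_(A : {set 'I_n} | is_clique e A) #|A|.

Definition adj_matrix (R : nzRingType) (n : nat) (e : rel 'I_n) : 'M[R]_n :=
  \matrix_(i, j) (e i j)%:R%R.

(* Main.v *)
Require Import Defs.
From HB Require Import structures.
From mathcomp Require Import all_boot all_order all_algebra.
From mathcomp Require Import reals.
From mathcomp Require Import ring lra zify.
Set Implicit Arguments. Unset Strict Implicit. Unset Printing Implicit Defensive.
Import Order.TTheory GRing.Theory Num.Theory.
Local Open Scope ring_scope.

Section Alg.
Variable R : fieldType.

Lemma prod_seqN (s : seq R) (F : R -> {poly R}) :
  \prod_(x <- s) - F x = (-1) ^+ size s * \prod_(x <- s) F x.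
Proof.
elim: s => [|x s IH]; first by rewrite !big_nil expr0 mul1r.
by rewrite !big_cons IH /= exprS mulN1r !mulNr mulrCA.
Qed.

Lemma map_char_poly_mx n (A : 'M[R]_n) (q : {poly R}) :
  map_mx (comp_poly q) (char_poly_mx A) = q%:M - map_mx polyC A.
Proof.
apply/matrixP => i j; rewrite !mxE /=.
rewrite comp_polyB comp_polyC; congr (_ - _).
by case: (i == j); rewrite /= ?mulr1n ?mulr0n ?comp_polyX ?comp_poly0.
Qed.

Lemma char_poly_sqr n (A : 'M[R]_n) (s : seq R) :
  char_poly A = \prod_(x <- s) ('X - x%:P) ->
  char_poly (A *m A) = \prod_(x <- s) ('X - (x ^+ 2)%:P).
Proof.
move=> hA.
have hs : size s = n.
  have := size_char_poly A; rewrite hA size_prod_XsubC; by case.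
set M := char_poly_mx A.
set N := map_mx (comp_poly (- 'X)) M.
have hN : N = - ('X%:M + map_mx polyC A).
  by rewrite /N map_char_poly_mx raddfN /= opprD.
have hMN : M *m N = - ('X^2%:M - map_mx polyC (A *m A)).
  rewrite hN /M /char_poly_mx mulmxN; congr (- _).
  rewrite mulmxDr !mulmxBl map_mxM -!scalar_mxM mul_scalar_mx mul_mx_scalar.
  by rewrite expr2 addrA subrK.
have hdetN : \det N = (char_poly A) \Po (- 'X).
  by rewrite /N det_map_mx.
have h2 : \det ('X^2%:M - map_mx polyC (A *m A)) = char_poly (A *m A) \Po 'X^2.
  by rewrite /char_poly -det_map_mx map_char_poly_mx.
have key : char_poly (A *m A) \Po 'X^2 = (\prod_(x <- s) ('X - (x ^+ 2)%:P)) \Po 'X^2.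
  have := congr1 determinant hMN.
  rewrite det_mulmx hdetN -/(char_poly A) -[X in \det X]scaleN1r detZ h2 hA.
  idtac.
  rewrite rmorph_prod /= -big_split /=.
  under eq_bigr => x _ do rewrite comp_polyB comp_polyX comp_polyC.
  have E : forall x : R, ('X - x%:P) * (- 'X - x%:P) = - ('X^2 - (x ^+ 2)%:P).
    move=> x; rewrite expr2 polyCM; ring.
  under eq_bigr => x _ do rewrite E.
  rewrite prod_seqN hs => /(congr1 (fun p => (-1) ^+ n * p)).
  rewrite !mulrA -!exprD -signr_odd oddD addbb expr0 !mul1r => <-.
  by rewrite rmorph_prod /=; apply: eq_bigr => x _; rewrite comp_polyB comp_polyX comp_polyC.
apply/eqP; rewrite -subr_eq0 -(comp_poly_eq0 _ (q := 'X^2)); last by rewrite size_polyXn.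
by rewrite comp_polyB key subrr.
Qed.
End Alg.

Section Seqs.
Variable R : realDomainType.

Lemma sorted_pos (s : seq R) i : sorted (fun x y : R => y <= x) s ->
  (i < count (fun x : R => (0 < x)%R) s)%N -> 0 < s`_i.
Proof.
elim: s i => [|x t IH] i //= hs.
have ht : sorted (fun x y : R => y <= x) t by move: hs; case: t {IH} => //= y t /andP [].
case: (ltrP 0 x) => hx.
  by case: i => [|i] //=; rewrite add1n ltnS => /IH; apply.
have : all (fun y => y <= x) t.
  apply: (order_path_min (leT := fun x y => y <= x)) => //.
  by move=> a b c hab hbc; apply: le_trans hbc hab.
move=> hall; have -> : count (fun x0 => 0 < x0) t = 0%N.
  apply/eqP; rewrite -leqn0 leqNgt -has_count; apply/hasPn => y /(allP hall) hy.
  by rewrite -leNgt (le_trans hy hx).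
by rewrite add0n; case: ltrP hx => //; rewrite ltNge => /negbTE ->.
Qed.

Lemma sum_ord_take (F : R -> R) (s : seq R) l : (l <= size s)%N ->
  \sum_(i < l) F s`_i = \sum_(x <- take l s) F x.
Proof.
move=> hl; rewrite (big_nth 0) size_takel // big_mkord.
by apply: eq_bigr => i _; rewrite nth_take.
Qed.

Lemma sum_if_count (P : pred R) (c : R) (s : seq R) :
  \sum_(x <- s) (if P x then c else 0) = c *+ count P s.
Proof.
elim: s => [|x s IH]; first by rewrite big_nil.
by rewrite big_cons IH /=; case: (P x); rewrite ?add0r // add1n mulrS.
Qed.

Lemma sum_const_seq (c : R) (s : seq R) : \sum_(x <- s) c = c *+ size s.
Proof.
elim: s => [|x s IH]; first by rewrite big_nil.
by rewrite big_cons IH /= mulrS.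
Qed.

Lemma sumq (b c : R) (s : seq R) :
  \sum_(x <- s) (x ^+ 2 + b * x - c) = \sum_(x <- s) x ^+ 2 + b * \sum_(x <- s) x - c *+ size s.
Proof.
rewrite sumrB big_split /= -mulr_sumr sum_const_seq //.
Qed.

Lemma rhs_ge0 (m w : nat) : 0 <= 2 * m%:R * (w%:R - 1) / w%:R :> R.
Proof.
case: w => [|w]; first by rewrite invr0 mulr0.
apply: divr_ge0 => //; apply: mulr_ge0; first by apply: mulr_ge0.
by rewrite subr_ge0 ler1n.
Qed.

End Seqs.

Lemma ineq (d mu n : nat): (1 <= mu -> mu <= d -> d + 2 <= n -> n*mu + 2*d = d*d + mu*d + mu ->
  3*mu*d*d + 6*mu*d <= 2*d*(n*mu) + 6*mu*mu)%N.
Proof.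
move=> h1 h2 h3 h4.
have hm : ((d + 2) * mu <= n * mu)%N by rewrite leq_mul2r h3 orbT.
have d3 : (3 <= d)%N.
  case: (leqP 3 d) => // hd.
  have : (d = 0 \/ d = 1 \/ d = 2)%N by lia.
  by case=> [E|[E|E]]; rewrite E in h2 h4 hm; lia.
have a0 : (d * (n * mu) + 2 * (d * d) = d * (d * d) + mu * (d * d) + mu * d)%N.
  have := congr1 (muln d) h4; rewrite !mulnDr; lia.
case: (leqP 8 d) => h8.
  have a1 : (mu * (d * d) <= d * (d * d))%N by rewrite leq_mul2r h2 orbT.
  have a2 : (8 * (d * d) <= d * (d * d))%N by rewrite leq_mul2r h8 orbT.
  have a3 : (mu * d <= d * d)%N by rewrite leq_mul2r h2 orbT.
  lia.
have : (d = 3 \/ d = 4 \/ d = 5 \/ d = 6 \/ d = 7)%N by lia.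
case=> [E|[E|[E|[E|E]]]]; rewrite E in h2 h4 a0 *.
- have : (mu = 1 \/ mu = 2 \/ mu = 3)%N by lia.
  by case=> [M|[M|M]]; rewrite M in h4 a0 *; lia.
- have : (mu = 1 \/ mu = 2 \/ mu = 3 \/ mu = 4)%N by lia.
  by case=> [M|[M|[M|M]]]; rewrite M in h4 a0 *; lia.
- have : (mu = 1 \/ mu = 2 \/ mu = 3 \/ mu = 4 \/ mu = 5)%N by lia.
  by case=> [M|[M|[M|[M|M]]]]; rewrite M in h4 a0 *; lia.
- have : (mu = 1 \/ mu = 2 \/ mu = 3 \/ mu = 4 \/ mu = 5 \/ mu = 6)%N by lia.
  by case=> [M|[M|[M|[M|[M|M]]]]]; rewrite M in h4 a0 *; lia.
- have : (mu = 1 \/ mu = 2 \/ mu = 3 \/ mu = 4 \/ mu = 5 \/ mu = 6 \/ mu = 7)%N by lia.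
  by case=> [M|[M|[M|[M|[M|[M|M]]]]]]; rewrite M in h4 a0 *; lia.
Qed.

Section Graph.
Variables (n d mu : nat) (e : rel 'I_n).
Hypothesis hsrg : @srg n d 1 mu e.

Lemma irr x : e x x = false.
Proof. by case: hsrg => [[h _] _ _ _]; apply/negbTE. Qed.
Lemma sym x y : e x y = e y x.
Proof. by case: hsrg => [[_ h] _ _ _]. Qed.
Lemma deg x : #|[set y | e x y]| = d.
Proof. by case: hsrg. Qed.
Lemma lam x y : e x y -> #|[set z | e x z && e y z]| = 1%N.
Proof. by case: hsrg => _ _ h _; apply: h. Qed.
Lemma muP x y : x != y -> ~~ e x y -> #|[set z | e x z && e y z]| = mu.
Proof. by case: hsrg => _ _ _ h; apply: h. Qed.

Lemma clique_le3 : (clique_number e <= 3)%N.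
Proof.
apply/bigmax_leqP => A /forallP hA.
have cl : forall u v, u \in A -> v \in A -> u != v -> e u v.
  move=> u v uA vA uv; have := hA u; rewrite uA /= => /forallP/(_ v).
  by rewrite vA uv.
case: (leqP #|A| 2) => [h|h]; first by apply: (leq_trans h).
have [x xA] : exists x, x \in A.
  by apply/set0Pn; rewrite -card_gt0; apply: leq_trans h.
have : (0 < #|A :\ x|)%N by rewrite (cardsD1 x A) xA /= add1n ltnS in h; apply: leq_trans h.
rewrite card_gt0 => /set0Pn [y]; rewrite in_setD1 => /andP [yx yA].
have exy : e x y by apply: cl; rewrite // eq_sym.
have sub : A :\: [set x; y] \subset [set z | e x z && e y z].
  apply/subsetP => z; rewrite !inE negb_or => /andP [/andP [zx zy] zA].
  by rewrite !cl // eq_sym.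
have c1 := subset_leq_card sub; rewrite lam // in c1.
have c2 : (#|A :&: [set x; y]| <= 2)%N.
  apply: leq_trans (subset_leq_card (subsetIr _ _)) _.
  by rewrite cards2; case: (x != y).
have := cardsID [set x; y] A; lia.
Qed.

Lemma clique_ge3 : (0 < d)%N -> (0 < n)%N -> (3 <= clique_number e)%N.
Proof.
move=> d0 n0; pose x := Ordinal n0.
have : (0 < #|[set y | e x y]|)%N by rewrite deg.
rewrite card_gt0 => /set0Pn [y]; rewrite inE => exy.
have : (0 < #|[set z | e x z && e y z]|)%N by rewrite lam.
rewrite card_gt0 => /set0Pn [z]; rewrite inE => /andP [exz eyz].
have xy : x != y by apply: contraTneq exy => ->; rewrite irr.
have xz : x != z by apply: contraTneq exz => ->; rewrite irr.
have yz : y != z by apply: contraTneq eyz => ->; rewrite irr.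
have cl : is_clique e [set x; y; z].
  apply/forallP => u; apply/implyP => uA; apply/forallP => v; apply/implyP => vA.
  apply/implyP => uv; move: uA vA uv; rewrite !inE.
  move=> /orP [/orP [/eqP ->|/eqP ->]|/eqP ->] /orP [/orP [/eqP ->|/eqP ->]|/eqP ->];
  rewrite ?eqxx // => _; rewrite ?exy ?exz ?eyz // sym ?exy ?exz ?eyz //.
have c3 : #|[set x; y; z]| = 3%N.
  rewrite setUC cardsU1 !inE negb_or (eq_sym z) (eq_sym z) xz yz /= cards2 xy //.
apply: leq_trans (_ : 3 <= #|[set x; y; z]|)%N _; first by rewrite c3.
rewrite /clique_number; exact: (@leq_bigmax_cond _ (is_clique e) (fun A : {set _} => #|A|) _ cl).
Qed.

Lemma set2_inj (a b c f : 'I_n) : [set a; b] = [set c; f] -> (a < b)%N -> (c < f)%N ->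
  a = c /\ b = f.
Proof.
move=> E ab cf.
have ha : a \in [set c; f] by rewrite -E !inE eqxx.
have hb : b \in [set c; f] by rewrite -E !inE eqxx orbT.
have hc : c \in [set a; b] by rewrite E !inE eqxx.
have hf : f \in [set a; b] by rewrite E !inE eqxx orbT.
move: ha hb hc hf; rewrite !inE -!val_eqE => ha hb hc hf.
suff /andP [/eqP h1 /eqP h2] : (val a == val c) && (val b == val f).
  by split; apply: val_inj.
clear E; move: ha hb hc hf ab cf; case: a b c f => [a ?] [b ?] [c ?] [f ?] /=.
move=> /orP [/eqP ha|/eqP ha] /orP [/eqP hb|/eqP hb] /orP [/eqP hc|/eqP hc]
        /orP [/eqP hf|/eqP hf] ab cf; apply/andP; split; apply/eqP; lia.
Qed.

Lemma handshake : (n * d <= 2 * num_edges e)%N.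
Proof.
pose D0 := [set p : 'I_n * 'I_n | e p.1 p.2].
pose B := [set p : 'I_n * 'I_n | (p.1 < p.2)%N].
pose f := fun p : 'I_n * 'I_n => [set p.1; p.2].
pose Es := [set E : {set 'I_n} | [exists x, exists y, e x y && (E == [set x; y])]].
have hD0 : #|D0| = (n * d)%N.
  rewrite -sum1_card.
  transitivity (\sum_(p : 'I_n * 'I_n) (e p.1 p.2 : nat)).
    by rewrite big_mkcond /=; apply: eq_bigr => p _; rewrite inE; case: (e _ _).
  rewrite -(pair_big xpredT xpredT (fun x y => (e x y : nat))) /=.
  transitivity (\sum_(x : 'I_n) d).
    apply: eq_bigr => x _; rewrite -(deg x) -sum1_card big_mkcond /=.
    rewrite [RHS]big_mkcond /=; by apply: eq_bigr => y _; rewrite inE; case: (e _ _).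
  by rewrite sum_nat_const card_ord.
have sub1 : forall C : {set 'I_n * 'I_n}, C \subset D0 -> f @: C \subset Es.
  move=> C CD. apply/subsetP => E /imsetP [p pC ->]; rewrite inE.
  apply/existsP; exists p.1; apply/existsP; exists p.2; rewrite eqxx andbT.
  by have := subsetP CD p pC; rewrite inE.
have ne : forall p, p \in D0 -> p.1 != p.2.
  move=> [a b]; rewrite inE /= => eab; apply: contraTneq eab => ->; by rewrite irr.
have inj1 : {in D0 :&: B &, injective f}.
  move=> [a b] [c g]; rewrite !inE /f /= => /andP[_ ab] /andP[_ cg] E.
  by have [-> ->] := set2_inj E ab cg.
have inj2 : {in D0 :\: B &, injective f}.
  move=> [a b] [c g] ha hc; have := ne _ (subsetP (subsetDl _ _) _ ha).
  have := ne _ (subsetP (subsetDl _ _) _ hc).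
  move: ha hc; rewrite !inE /= /f /= -!val_eqE => /andP [ab _] /andP [cg _] ncg nab E.
  have ab' : (b < a)%N by move: ab nab; case: a b {E} => [a ?] [b ?] /=; lia.
  have cg' : (g < c)%N by move: cg ncg; case: c g {E} => [c ?] [g ?] /=; lia.
  rewrite setUC [in RHS]setUC in E.
  by have [-> ->] := set2_inj E ab' cg'.
have c1 := subset_leq_card (sub1 _ (subsetIl D0 B)); rewrite card_in_imset // in c1.
have c2 := subset_leq_card (sub1 _ (subsetDl D0 B)); rewrite card_in_imset // in c2.
have := cardsID B D0; rewrite hD0 /num_edges -/Es => <-; rewrite mul2n -addnn; exact: leq_add c1 c2.
Qed.

Definition ex_na := [exists x, exists y, (x != y) && ~~ e x y].
Definition mu' : nat := if ex_na then mu else 0%N.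

Lemma mu'_bounds : ex_na -> (mu <= d)%N /\ (d + 2 <= n)%N.
Proof.
move=> /existsP [x /existsP [y /andP [xy nxy]]]; split.
  rewrite -(muP xy nxy) -(deg x); apply: subset_leq_card.
  by apply/subsetP => z; rewrite !inE => /andP [].
have : #|x |: (y |: [set z | e x z])| = (d + 2)%N.
  rewrite !cardsU1 deg !inE negb_or xy irr /= (negbTE nxy) /=; lia.
move=> <-; rewrite -[n in (_ <= n)%N]card_ord; exact: max_card.
Qed.

Variable R : numFieldType.
Notation A := (adj_matrix R e).
Notation J := (const_mx 1 : 'M[R]_n).

Lemma sum_card (P : pred 'I_n) : \sum_(k < n) ((P k)%:R : R) = #|[set k | P k]|%:R.
Proof.
rewrite -sum1_card natr_sum [RHS]big_mkcond /=; apply: eq_bigr => k _.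
by rewrite inE; case: (P k).
Qed.

Lemma AA_entry i j : (A *m A) i j = (if i == j then d else if e i j then 1 else mu')%:R.
Proof.
rewrite !mxE.
transitivity (\sum_(k < n) (((e i k && e j k) : bool)%:R : R)).
  by apply: eq_bigr => k _; rewrite !mxE (sym k j); case: (e i k); case: (e j k);
     rewrite ?mulr1 ?mulr0 ?mul0r.
rewrite sum_card; case: eqP => [->|ij].
  by rewrite (_ : [set k | e j k && e j k] = [set k | e j k]) ?deg //; apply/setP => k; rewrite !inE andbb.
case: ifP => [eij|neij]; first by rewrite lam.
have exn : ex_na.
  by apply/existsP; exists i; apply/existsP; exists j; rewrite neij andbT; apply/eqP.
by rewrite /mu' exn muP //; [apply/eqP | rewrite neij].
Qed.

Lemma AA : A *m A = (d%:R - mu'%:R)%:M + (1 - mu'%:R) *: A + mu'%:R *: J.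
Proof.
apply/matrixP => i j; rewrite AA_entry !mxE.
case: eqP => [->|ij]; first by rewrite irr /= mulr0 addr0 mulr1n mulr1 subrK.
rewrite mulr0n add0r mulr1; case: (e i j) => /=.
  by rewrite mulr1 subrK.
by rewrite mulr0 add0r.
Qed.

Lemma AJ : A *m J = d%:R *: J.
Proof.
apply/matrixP => i j; rewrite !mxE mulr1.
transitivity (\sum_(k < n) ((e i k)%:R : R)).
  by apply: eq_bigr => k _; rewrite !mxE mulr1.
by rewrite sum_card deg.
Qed.

Lemma JA : J *m A = d%:R *: J.
Proof.
apply/matrixP => i j; rewrite !mxE mulr1.
transitivity (\sum_(k < n) ((e j k)%:R : R)).
  by apply: eq_bigr => k _; rewrite !mxE mul1r sym.
by rewrite sum_card deg.
Qed.

Lemma JJ : J *m J = n%:R *: J.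
Proof.
apply/matrixP => i j; rewrite !mxE mulr1.
under eq_bigr do rewrite !mxE mulr1.
by rewrite sumr_const card_ord.
Qed.

Lemma trA : \tr A = 0.
Proof. by rewrite /mxtrace big1 // => i _; rewrite mxE irr. Qed.

Lemma trAA : \tr (A *m A) = (n * d)%:R.
Proof.
rewrite /mxtrace (eq_bigr (fun _ => (d%:R : R))); last by move=> i _; rewrite AA_entry eqxx.
by rewrite sumr_const card_ord natrM mulr_natl.
Qed.

Lemma eig_prop (x : R) : eigenvalue A x ->
  x = d%:R \/ x ^+ 2 + (mu'%:R - 1) * x - (d%:R - mu'%:R) = 0.
Proof.
move=> /eigenvalueP [v vA v0].
have h1 : (x - d%:R) *: (v *m J) = 0.
  have : v *m A *m J = v *m (A *m J) by rewrite mulmxA.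
  by rewrite vA AJ -scalemxAl -scalemxAr => E; rewrite scalerBl E subrr.
have h2 : v *m (A *m A) = (x ^+ 2) *: v.
  by rewrite mulmxA vA -scalemxAl vA scalerA expr2.
case vJ : (v *m J == 0); last first.
  left; move: h1 => /eqP; rewrite scaler_eq0 vJ orbF subr_eq0 => /eqP //.
right; move: h2; rewrite AA !mulmxDr -!scalemxAr (eqP vJ) scaler0 addr0.
rewrite mul_mx_scalar vA scalerA.
set a := (d%:R - mu'%:R); set b := (1 - mu'%:R) * x => E.
have : (x ^+ 2 + (mu'%:R - 1) * x - a) *: v = 0.
  have -> : x ^+ 2 + (mu'%:R - 1) * x - a = x ^+ 2 - a - b by rewrite /b; ring.
  clear -E; move: a b E => a b E.
  by rewrite !scalerBl -E -addrA -opprD subrr.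
by move/eqP; rewrite scaler_eq0 (negbTE v0) orbF => /eqP.
Qed.

End Graph.

Lemma sum_trace (R : fieldType) n (A : 'M[R]_n) (s : seq R) :
  char_poly A = \prod_(x <- s) ('X - x%:P) -> size s = n /\ \sum_(x <- s) x = \tr A.
Proof.
move=> hA.
have hs : size s = n.
  have := size_char_poly A; rewrite hA size_prod_XsubC; by case.
split=> //; case: n A hA hs => [|n] A hA hs.
  by case: s hA hs => // _ _; rewrite big_nil /mxtrace big_ord0.
have := char_poly_trace A; rewrite hA /= => /(_ isT).
move=> E; have F := @coefPn_prod_XsubC R s; rewrite hs /= E in F.
by move/eqP: (F isT); rewrite eqr_opp => /eqP.
Qed.

Unset Implicit Arguments.

Theorem mainTheorem5 (R : realType) (n d mu : nat) (e : rel 'I_n) (s : seq R) :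
  @srg n d 1 mu e ->
  char_poly (adj_matrix R e) = \prod_(x <- s) ('X - x%:P) ->
  sorted (fun x y => y <= x) s ->
  let m := num_edges e in
  let omega := clique_number e in
  let npos := count (fun x => 0 < x) s in
  let l := minn npos omega in
  \sum_(i < l) s`_i ^+ 2 <= 2 * m%:R * (omega%:R - 1) / omega%:R.
Proof.
move=> hsrg hchar hsort /=.
set m := num_edges e; set omega := clique_number e.
set npos := count _ s; set l := minn npos omega.
set A := adj_matrix R e.
have [hs S1] := sum_trace hchar.
rewrite (trA hsrg) in S1.
have H2 := char_poly_sqr hchar.
rewrite -(big_map (fun x => x ^+ 2) xpredT (fun y => 'X - y%:P)) in H2.
have [_ S2] := sum_trace H2.
rewrite big_map (trAA hsrg) in S2.
set U : R := (mu' mu e)%:R.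
set D : R := d%:R.
set N : R := n%:R.
have EP : forall x, x \in s -> x = D \/ x ^+ 2 + (U - 1) * x - (D - U) = 0.
  move=> x xs; apply: (eig_prop hsrg).
  by rewrite eigenvalue_root_char hchar root_prod_XsubC.
have hnpos : (npos <= size s)%N by apply: count_size.
have hl1 : (l <= npos)%N by apply: geq_minl.
have hl2 : (l <= omega)%N by apply: geq_minr.
have pos_i : forall i, (i < l)%N -> 0 < s`_i /\ s`_i \in s.
  move=> i il; split; first by apply: sorted_pos hsort (leq_trans il hl1).
  by apply: mem_nth; apply: leq_trans il (leq_trans hl1 hnpos).
case: (posnP n) => [n0|n0].
  have -> : l = 0%N.
    by apply/eqP; rewrite -leqn0 (leq_trans hl1) // (leq_trans hnpos) // hs n0.
  by rewrite big_ord0 rhs_ge0.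
have QD : D ^+ 2 + (U - 1) * D - (D - U) = U * N.
  pose i0 := Ordinal n0.
  have : (A *m A) *m (const_mx 1 : 'M[R]_n) = A *m (A *m const_mx 1) by rewrite mulmxA.
  rewrite [in RHS](AJ hsrg) -scalemxAr (AJ hsrg) scalerA (AA hsrg).
  rewrite !mulmxDl mul_scalar_mx -!scalemxAl (AJ hsrg) JJ scalerA.
  move/matrixP/(_ i0 i0); rewrite !mxE !mulr1 -/U -/D -/N => E.
  by rewrite expr2 -E; ring.
have hom : (0 < d)%N -> omega = 3%N.
  by move=> d0; apply/eqP; rewrite eqn_leq (clique_le3 hsrg) (clique_ge3 hsrg).
have RHSb : (0 < d)%N -> N * D * 2 / 3 <= 2 * m%:R * (omega%:R - 1) / omega%:R.
  move=> d0; rewrite hom //.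
  have hm : N * D <= 2 * m%:R.
    by rewrite /N /D -natrM -[2 * _]natrM ler_nat; apply: (handshake hsrg).
  have -> : (3%N%:R : R) = 3 by [].
  lra.
have hU : U = (mu' mu e)%:R by [].
case hU0 : (mu' mu e) hU => [|mu1] hU.
-
  rewrite hU in QD.
  have hdd : (d * d = 2 * d)%N.
    apply/eqP; rewrite -(eqr_nat R) !natrM -/D.
    apply/eqP; move: QD; rewrite mul0r; lra.
  have : (d = 0 \/ d = 2)%N.
    case: (leqP d 2) => hd.
      have : (d = 0 \/ d = 1 \/ d = 2)%N by lia.
      by case=> [->|[E|->]]; auto; rewrite E in hdd.
    have h3 : (3 * d <= d * d)%N by rewrite leq_mul2r hd orbT.
    lia.
  case=> hd.
  + have -> : l = 0%N.
      apply/eqP; rewrite -leqn0 (leq_trans hl1) // leqn0 /npos.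
      apply/eqP; apply/eqP; rewrite -leqn0 leqNgt -has_count; apply/hasPn => x xs.
      move: S2; rewrite hd muln0 => /eqP; rewrite psumr_eq0; last by move=> y _; apply: sqr_ge0.
      move=> /allP /(_ x xs) /=; rewrite sqrf_eq0 => /eqP ->; by rewrite ltxx.
    by rewrite big_ord0 rhs_ge0.
  + have EP2 : forall x, x \in s -> x = 2 \/ x = -1.
      move=> x /EP; rewrite hU /D hd => [[->|]]; first by left.
      move=> h; have : (x - 2) * (x + 1) = 0 by rewrite -h; ring.
      by move/eqP; rewrite mulf_eq0 subr_eq0 addr_eq0 => /orP [/eqP ->|/eqP ->]; auto.
    have hN : N = 3 * npos%:R.
      have : \sum_(x <- s) x = \sum_(x <- s) ((if 0 < x then 3 else 0) - 1).
        apply: eq_big_seq => x /EP2 [->|->]; first by rewrite ifT //; lra.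
        by rewrite ifF; [lra | apply/negbTE; rewrite -leNgt; lra].
      rewrite S1 sumrB sum_if_count sum_const_seq hs => /eqP.
      by rewrite eq_sym subr_eq0 => /eqP E; rewrite /N mulr_natr /npos E.
    have hd0 : (0 < d)%N by rewrite hd.
    apply: le_trans (RHSb hd0).
    have -> : \sum_(i < l) s`_i ^+ 2 = \sum_(i < l) (4 : R).
      apply: eq_bigr => i _; have [p1 p2] := pos_i i (ltn_ord i).
      case: (EP2 _ p2) p1 => -> h; first by rewrite expr2; lra.
      by move: h; rewrite oppr_gt0 ltr10.
    rewrite sumr_const card_ord hN /D hd.
    have : (l%:R : R) <= npos%:R by rewrite ler_nat.
    rewrite -[4 *+ l]mulr_natr; lra.
-
  have exn : ex_na e by move: hU0; rewrite /mu'; case: (ex_na e).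
  have hmu : mu = mu1.+1 by move: hU0; rewrite /mu' exn.
  have [hmd hnd] := mu'_bounds hsrg exn.
  have hUm : (mu%:R : R) = U by rewrite hU hmu.
  have hQn : (n * mu + 2 * d = d * d + mu * d + mu)%N.
    apply/eqP; rewrite -(eqr_nat R) !natrD !natrM -/N -/D hUm.
    by apply/eqP; move: QD; rewrite expr2 => QD; lra.
  have hmu1 : (1 <= mu)%N by rewrite hmu.
  have hin := ineq hmu1 hmd hnd hQn.
  have hinR : 3 * U * D * D + 6 * U * D <= 2 * D * (N * U) + 6 * U * U.
    by move: hin; rewrite -(ler_nat R) !natrD !natrM hUm.
  have hU1 : 1 <= U by rewrite hU ler1n.
  have hUD : U <= D by rewrite -hUm ler_nat.
  have d0 : (0 < d)%N by lia.
  have hD1 : 1 <= D by rewrite ler1n.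
  have hN1 : 1 <= N by rewrite ler1n.
  have hcnt : count (fun x => x == D) s = 1%N.
    have E1 : \sum_(x <- s) (x ^+ 2 + (U - 1) * x - (D - U)) = U * N.
      rewrite sumq S1 S2 hs mulr0 addr0 natrM -/N -/D -mulr_natr; ring.
    have E2 : \sum_(x <- s) (x ^+ 2 + (U - 1) * x - (D - U)) =
              \sum_(x <- s) (if x == D then U * N else 0).
      apply: eq_big_seq => x xs; case: eqP => [->|nx]; first by rewrite QD.
      by case: (EP x xs).
    rewrite E2 sum_if_count in E1.
    have : (U * N) * ((count (fun x => x == D) s)%:R - 1) = 0.
      by rewrite mulrBr mulr1 mulr_natr E1 subrr.
    move/eqP; rewrite mulf_eq0 => /orP [h|h].
      suff : (0 : R) < 0 by rewrite ltxx.
      by move: h; rewrite mulf_eq0 => /orP [] /eqP h; lra.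
    by apply/eqP; rewrite -(eqr_nat R); move: h; rewrite subr_eq0.
  set K := D ^+ 2 - (D - U).
  have T : forall i, (i < l)%N -> s`_i ^+ 2 <= (s`_i == D)%:R * K + (D - U).
    move=> i il; have [p1 p2] := pos_i i il.
    case: eqP => [E|nE]; first by rewrite E mul1r /K subrK.
    rewrite mul0r add0r; case: (EP _ p2) => // h.
    move: p1 h; set y := s`_i => p1 h.
    have : 0 <= (U - 1) * y by apply: mulr_ge0; lra.
    move: h; rewrite expr2 => h; lra.
  have LHS1 : \sum_(i < l) s`_i ^+ 2 <= \sum_(i < l) ((s`_i == D)%:R * K + (D - U)).
    by apply: ler_sum => i _; apply: T.
  rewrite big_split /= -mulr_suml sumr_const card_ord in LHS1.
  set c := (\sum_(i < l) ((_ == D)%:R)) in LHS1.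
  have hc1 : c <= 1.
    have E := sum_ord_take (fun x => ((x == D)%:R : R)) (leq_trans hl1 hnpos).
    have Ec : c = \sum_(x <- take l s) ((x == D)%:R : R) by exact: E.
    rewrite Ec.
    have -> : \sum_(x <- take l s) ((x == D)%:R : R) = \sum_(x <- take l s) (if x == D then 1 else 0).
      by apply: eq_bigr => x _; case: (x == D).
    rewrite sum_if_count.
    have hc : (count (fun x => x == D) (take l s) <= 1)%N.
      by rewrite -hcnt -{2}(cat_take_drop l s) count_cat leq_addr.
    by rewrite -(ler_nat R) in hc.
  have hc0 : 0 <= c by apply: sumr_ge0 => i _; apply: ler0n.
  have hK : 0 <= K by rewrite /K expr2; nra.
  have hl3 : (l%:R : R) <= 3.
    have : (l <= 3)%N by rewrite -(hom d0).
    by rewrite -(ler_nat R).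
  have i1 : c * K <= K by rewrite -{2}[K]mul1r; apply: ler_wpM2r.
  have i2 : l%:R * (D - U) <= 3 * (D - U) by apply: ler_wpM2r; lra.
  apply: le_trans (RHSb d0); apply: le_trans LHS1 _.
  have i3 : U * (3 * D ^+ 2 + 6 * D - 6 * U - 2 * D * N) <= 0.
    by rewrite expr2; lra.
  rewrite pmulr_rle0 in i3; last lra.
  have eK : K = D ^+ 2 - (D - U) by [].
  rewrite -mulr_natr; clearbody K; lra.
Qed.
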